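(* Let $W$ be an NDCSE with respect to a closed abelian subgroup $H\subseteq G$. Then $\mathcal A_W=\mathcal T_H\circ\mathcal P_D$, where $\mathcal T_H(X)=\int_H R(h)XR(h)^\dagger\,dh$ (normalized Haar measure on $H$) and $\mathcal P_D$ is the Hilbert–Schmidt orthogonal projector onto $\mathcal L^{\mathcal D}$.
   Context: Standing setting: $G$ compact group with normalized Haar measure, $R:G\to\mathsf U(\mathcal H)$ a continuous unitary representation on a finite-dimensional Hilbert space $\mathcal H$; $\mathcal L=\mathrm{End}(\mathcal H)$ with Hilbert–Schmidt inner product. For an orthonormal basis $W$ of $\mathcal H$, $\mathcal A_W(X)=\sum_{w\in W}\langle w|X|w\rangle|w\rangle\langle w|$. A Fourier basis (FB) is an orthonormal basis $W$ with a decomposition $\mathcal H=\bigoplus_{\eta,i}\mathcal H^{\eta,i}$ into irreducible $G$-submodules such that $W=\bigcup W^{\eta,i}$ with $W^{\eta,i}$ an orthonormal basis of $\mathcal H^{\eta,i}$; $\mathcal L^{\mathcal D}=\bigoplus_{\eta,i}\mathrm{End}(\mathcal H^{\eta,i})$. A commuting subgroup eigenbasis (CSE) with respect to an abelian subgroup $H\subseteq G$ is an FB each of whose elements is a simultaneous eigenvector of all $R(h)$, $h\in H$; it is non-degenerate (NDCSE) if for every $(\eta,i)$ the restriction of $\mathcal H^{\eta,i}$ to $H$ is multiplicity-free (equivalently, distinct elements of $W^{\eta,i}$ carry distinct characters of $H$). *)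

(* Defs.v *)
From HB Require Import structures.
From mathcomp Require Import all_boot all_order all_algebra.
From mathcomp Require Import classical_sets boolp reals ereal topology normedtype
  measure lebesgue_integral.
From mathcomp Require Import complex.

Set Implicit Arguments.
Unset Strict Implicit.
Unset Printing Implicit Defensive.

Import Order.TTheory GRing.Theory Num.Theory numFieldNormedType.Exports.
Local Open Scope ring_scope.
Local Open Scope classical_set_scope.

Definition is_topological_group (G : ptopologicalType)
    (mul : G -> G -> G) (inv : G -> G) (e : G) : Prop :=
  [/\ (forall x y z, mul x (mul y z) = mul (mul x y) z),
      (forall x, mul e x = x /\ mul x e = x),
      (forall x, mul (inv x) x = e /\ mul x (inv x) = e),
      continuous (fun p : G * G => mul p.1 p.2) &
      continuous inv].

Definition is_abelian_subgroup (G : Type) (mul : G -> G -> G) (inv : G -> G)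
    (e : G) (H : set G) : Prop :=
  [/\ H e,
      (forall x y, H x -> H y -> H (mul x y)),
      (forall x, H x -> H (inv x)) &
      (forall x y, H x -> H y -> mul x y = mul y x)].

Definition Borel (G : ptopologicalType) := g_sigma_algebraType (@open G).

Definition is_normalized_haar (R : realType) (G : ptopologicalType)
    (mul : G -> G -> G) (H : set G)
    (mu : {measure set (Borel G) -> \bar R}) : Prop :=
  [/\ mu [set: Borel G] = 1%E,
      mu (~` (H : set (Borel G))) = 0%E &
      (forall h0, H h0 -> forall A : set (Borel G), measurable A ->
         mu [set (mul h0 x : Borel G) | x in A] = mu A)].

Definition adjmx (R : realType) (m p : nat) (M : 'M[R[i]]_(m, p)) : 'M[R[i]]_(p, m) :=
  (map_mx (@conjc R) M)^T.

Definition hs_dot (R : realType) (n : nat) (X Y : 'M[R[i]]_n) : R[i] :=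
  \tr (adjmx X *m Y).

Definition is_cont_unitary_rep (R : realType) (G : ptopologicalType)
    (mul : G -> G -> G) (e : G) (n : nat) (rep : G -> 'M[R[i]]_n) : Prop :=
  [/\ rep e = 1%:M,
      (forall g h, rep (mul g h) = rep g *m rep h),
      (forall g, rep g *m adjmx (rep g) = 1%:M) &
      (forall i j, continuous (fun g => complex.Re (rep g i j)) /\
                   continuous (fun g => complex.Im (rep g i j)))].

Definition is_orthonormal_basis (R : realType) (n : nat)
    (w : 'I_n -> 'cV[R[i]]_n) : Prop :=
  forall i j, adjmx (w i) *m w j = (i == j)%:R%:M.

(* Subspace of C^n spanned by {w j | blk j = b}; subspaces are encoded,
   as in mxalgebra, by row spaces: row j is the transpose of w j. *)
Definition block_space (R : realType) (n k : nat)
    (w : 'I_n -> 'cV[R[i]]_n) (blk : 'I_n -> 'I_k) (b : 'I_k) : 'M[R[i]]_n :=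
  \matrix_(j, i) (if blk j == b then w j i ord0 else 0).

(* the subspace (row space of S) is invariant under all rep g;
   a column vector v is mapped to rep g *m v, i.e. v^T to v^T *m (rep g)^T *)
Definition is_invariant (R : realType) (G : Type) (n m : nat)
    (rep : G -> 'M[R[i]]_n) (S : 'M[R[i]]_(m, n)) : Prop :=
  forall g, (S *m (rep g)^T <= S)%MS.

Definition is_irreducible_submodule (R : realType) (G : Type) (n : nat)
    (rep : G -> 'M[R[i]]_n) (S : 'M[R[i]]_n) : Prop :=
  [/\ S != 0,
      is_invariant rep S &
      (forall U : 'M[R[i]]_n, (U <= S)%MS -> is_invariant rep U ->
         (U == 0) || (U == S)%MS)].

(* Fourier basis: orthonormal basis w together with a partition blk of its
   elements into blocks W^b, each spanning an irreducible G-submodule H^b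
   (so that H = (+)_b H^b). *)
Definition is_FB (R : realType) (G : Type) (n k : nat)
    (rep : G -> 'M[R[i]]_n) (w : 'I_n -> 'cV[R[i]]_n) (blk : 'I_n -> 'I_k) : Prop :=
  is_orthonormal_basis w /\
  forall b, is_irreducible_submodule rep (block_space w blk b).

Definition is_CSE (R : realType) (G : Type) (n k : nat)
    (rep : G -> 'M[R[i]]_n) (H : set G) (w : 'I_n -> 'cV[R[i]]_n)
    (blk : 'I_n -> 'I_k) : Prop :=
  is_FB rep w blk /\
  forall j h, H h -> exists lam : R[i], rep h *m w j = lam *: w j.

Definition is_NDCSE (R : realType) (G : Type) (n k : nat)
    (rep : G -> 'M[R[i]]_n) (H : set G) (w : 'I_n -> 'cV[R[i]]_n)
    (blk : 'I_n -> 'I_k) : Prop :=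
  is_CSE rep H w blk /\
  forall j j', j != j' -> blk j = blk j' ->
    exists h, [/\ H h & exists lam lam' : R[i],
      [/\ rep h *m w j = lam *: w j, rep h *m w j' = lam' *: w j' & lam != lam']].

Definition dephase (R : realType) (n : nat) (w : 'I_n -> 'cV[R[i]]_n)
    (X : 'M[R[i]]_n) : 'M[R[i]]_n :=
  \sum_(j < n) (adjmx (w j) *m X *m w j) ord0 ord0 *: (w j *m adjmx (w j)).

Definition block_proj (R : realType) (n k : nat) (w : 'I_n -> 'cV[R[i]]_n)
    (blk : 'I_n -> 'I_k) (b : 'I_k) : 'M[R[i]]_n :=
  \sum_(j < n | blk j == b) w j *m adjmx (w j).

(* L^D = (+)_b End(H^b), End(H^b) being identified with the operators on H
   supported on H^b (X = Pi_b X Pi_b). *)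
Definition in_LD (R : realType) (n k : nat) (w : 'I_n -> 'cV[R[i]]_n)
    (blk : 'I_n -> 'I_k) (X : 'M[R[i]]_n) : Prop :=
  exists Xb : 'I_k -> 'M[R[i]]_n,
    (forall b, Xb b = block_proj w blk b *m Xb b *m block_proj w blk b) /\
    X = \sum_(b < k) Xb b.

Definition is_HS_orth_projector (R : realType) (n : nat)
    (V : 'M[R[i]]_n -> Prop) (P : 'M[R[i]]_n -> 'M[R[i]]_n) : Prop :=
  forall X, V (P X) /\ (forall Y, V Y -> hs_dot (X - P X) Y = 0).

Definition cintegral (R : realType) (T : ptopologicalType)
    (mu : {measure set (Borel T) -> \bar R}) (D : set T) (f : T -> R[i]) : R[i] :=
  (Rintegral mu (D : set (Borel T)) (fun x => complex.Re (f x)) +i*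
   Rintegral mu (D : set (Borel T)) (fun x => complex.Im (f x)))%C.

Definition twirl (R : realType) (G : ptopologicalType) (n : nat)
    (rep : G -> 'M[R[i]]_n) (mu : {measure set (Borel G) -> \bar R})
    (H : set G) (X : 'M[R[i]]_n) : 'M[R[i]]_n :=
  \matrix_(i, j) cintegral mu H (fun h => (rep h *m X *m adjmx (rep h)) i j).

(* Main.v *)
Require Import Defs.
From HB Require Import structures.
From mathcomp Require Import all_boot all_order all_algebra.
From mathcomp Require Import classical_sets boolp reals ereal topology normedtype
  measure lebesgue_integral measurable_realfun lebesgue_stieltjes_measure lebesgue_measure.
From mathcomp Require Import complex.
Import Order.TTheory GRing.Theory Num.Theory numFieldNormedType.Exports.
Local Open Scope ring_scope.
Local Open Scope classical_set_scope.
Set Implicit Arguments. Unset Strict Implicit. Unset Printing Implicit Defensive.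
Section S.
Variables (R : realType) (G : ptopologicalType).
Lemma open_Bmeas (A : set G) : open A -> measurable (A : set (Borel G)).
Proof. by move=> oA; apply: sub_sigma_algebra. Qed.

Lemma cont_meas (g : G -> R) : continuous g -> measurable_fun [set: Borel G] g.
Proof.
move=> cg; apply: (@measurability _ _ _ _ _ _ (@RGenOpens.G R)); first exact: RGenOpens.measurableE.
move=> _ [_ [a [b ->] <-]]; rewrite setTI; apply: open_Bmeas.
by move/continuousP: cg; apply; exact: interval_open.
Qed.
Definition rnice (g : G -> R) :=
  measurable_fun [set: Borel G] g /\ exists M : R, forall x, `|g x| <= M.

Lemma rnice_int (mu : {measure set (Borel G) -> \bar R}) (D : set G) g :
  measurable (D : set (Borel G)) -> (mu D < +oo)%E -> rnice g ->
  mu.-integrable (D : set (Borel G)) (EFin \o g).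
Proof.
move=> mD muD [mg [M hM]]; apply/integrableP; split.
  by apply/measurable_EFinP; apply: measurable_funTS.
apply: (@le_lt_trans _ _ ((`|M|)%:E * mu D)%E).
  apply: integral_le_bound => //.
  - by apply/measurable_EFinP; apply: measurable_funTS.
  - by apply: aeW => x _ /=; rewrite lee_fin (le_trans (hM x)) // ler_norm.
by apply: lte_mul_pinfty.
Qed.

Lemma rniceD f g : rnice f -> rnice g -> rnice (fun x => f x + g x).
Proof.
move=> [mf [M hM]] [mg [N hN]]; split; first exact: measurable_funD.
by exists (M + N) => x; rewrite (le_trans (ler_normD _ _)) // lerD.
Qed.

Lemma rniceM f g : rnice f -> rnice g -> rnice (fun x => f x * g x).
Proof.
move=> [mf [M hM]] [mg [N hN]]; split; first exact: measurable_funM.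
exists (M * N) => x; rewrite normrM ler_pM //.
Qed.

Lemma rniceN f : rnice f -> rnice (fun x => - f x).
Proof.
move=> [mf [M hM]]; split; first exact: measurableT_comp.
by exists M => x; rewrite normrN.
Qed.

Lemma rnice_cst c : rnice (fun _ => c).
Proof. by split; [exact: measurable_cst | exists `|c|]. Qed.
Lemma rnice_eq f g : rnice f -> (forall x, f x = g x) -> rnice g.
Proof. by move=> + e; have -> : f = g by apply: funext. Qed.

Local Notation Re := complex.Re.
Local Notation Im := complex.Im.

Lemma ReD (a b : R[i]) : Re (a + b) = Re a + Re b. Proof. by case: a; case: b. Qed.
Lemma ImD (a b : R[i]) : Im (a + b) = Im a + Im b. Proof. by case: a; case: b. Qed.
Lemma ReM (a b : R[i]) : Re (a * b) = Re a * Re b - Im a * Im b.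
Proof. by case: a; case: b. Qed.
Lemma ImM (a b : R[i]) : Im (a * b) = Re a * Im b + Im a * Re b.
Proof. by case: a => ? ?; case: b => ? ? /=; rewrite addrC. Qed.
Lemma ReJ (a : R[i]) : Re (conjc a) = Re a. Proof. by case: a. Qed.
Lemma ImJ (a : R[i]) : Im (conjc a) = - Im a. Proof. by case: a. Qed.

Definition nice (f : G -> R[i]) :=
  rnice (fun x => Re (f x)) /\ rnice (fun x => Im (f x)).

Lemma niceD f g : nice f -> nice g -> nice (fun x => f x + g x).
Proof.
move=> [f1 f2] [g1 g2]; split.
  by apply: (rnice_eq (rniceD f1 g1)) => x; rewrite ReD.
by apply: (rnice_eq (rniceD f2 g2)) => x; rewrite ImD.
Qed.

Lemma niceM f g : nice f -> nice g -> nice (fun x => f x * g x).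
Proof.
move=> [f1 f2] [g1 g2]; split.
  by apply: (rnice_eq (rniceD (rniceM f1 g1) (rniceN (rniceM f2 g2)))) => x; rewrite ReM.
by apply: (rnice_eq (rniceD (rniceM f1 g2) (rniceM f2 g1))) => x; rewrite ImM.
Qed.

Lemma niceJ f : nice f -> nice (fun x => conjc (f x)).
Proof.
move=> [f1 f2]; split; first by apply: (rnice_eq f1) => x; rewrite ReJ.
by apply: (rnice_eq (rniceN f2)) => x; rewrite ImJ.
Qed.

Lemma nice_cst c : nice (fun _ => c).
Proof. by split; apply: rnice_cst. Qed.

Lemma nice_eq f g : nice f -> (forall x, f x = g x) -> nice g.
Proof. by move=> + e; have -> : f = g by apply: funext. Qed.

Lemma nice_sum (I : eqType) (s : seq I) (P : pred I) (F : I -> G -> R[i]) :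
  (forall i, nice (F i)) -> nice (fun x => \sum_(i <- s | P i) F i x).
Proof.
move=> hF; elim: s => [|a s IH].
  by apply: (nice_eq (nice_cst 0)) => x; rewrite big_nil.
have ha : nice (fun x => if P a then F a x else 0).
  by case: (P a); [exact: hF | exact: nice_cst].
apply: (nice_eq (niceD ha IH)) => x.
by rewrite big_cons; case: (P a); rewrite ?add0r.
Qed.
Lemma inv_int (mu : {measure set (Borel G) -> \bar R}) (H : set G)
  (phi : G -> G) (mphi : measurable_fun [set: Borel G] (phi : Borel G -> Borel G))
  (hm : forall A : set (Borel G), measurable A -> mu (phi @^-1` A) = mu A)
  (hH : phi @^-1` H = H) (mH : measurable (H : set (Borel G))) (muH : (mu H < +oo)%E)
  (g : G -> R) : rnice g ->
  Rintegral mu (H : set (Borel G)) (fun x => g (phi x)) = Rintegral mu (H : set (Borel G)) g.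
Proof.
move=> rg; rewrite /Rintegral; congr fine.
have mg : measurable_fun [set: Borel G] (EFin \o g).
  by apply/measurable_EFinP; case: rg.
have ig : mu.-integrable (phi @^-1` H : set (Borel G)) ((EFin \o g) \o phi).
  rewrite hH; apply: (rnice_int mH muH).
  case: rg => mg' [M hM]; split; last by exists M.
  exact: (measurableT_comp mg' mphi).
have := integral_pushforward mphi mg ig mH.
rewrite hH => <-.
symmetry; apply: (eq_measure_integral (measure_function_pushforward__canonical__measure_function_Measure mu mphi)) => A mA _.
by rewrite /= /pushforward hm.
Qed.
Section CInt.
Variables (mu : {measure set (Borel G) -> \bar R}) (H : set G).
Hypotheses (mH : measurable (H : set (Borel G))) (muH : mu H = 1%E).

Let muHf : (mu H < +oo)%E. Proof. by rewrite muH ltry. Qed.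

Local Notation CI := (cintegral mu H).

Lemma cint_eq f g : {in H, f =1 g} -> CI f = CI g.
Proof.
move=> e; rewrite /cintegral; congr (_ +i* _)%C; apply: eq_Rintegral => x xH;
  by rewrite e.
Qed.

Lemma cintD f g : nice f -> nice g -> CI (fun x => f x + g x) = CI f + CI g.
Proof.
move=> [f1 f2] [g1 g2]; rewrite /cintegral.
under eq_Rintegral => x _ do rewrite ReD.
under [X in (_ +i* X)%C]eq_Rintegral => x _ do rewrite ImD.
by rewrite !RintegralD //; apply: rnice_int.
Qed.

Lemma cintZ c f : nice f -> CI (fun x => c * f x) = c * CI f.
Proof.
move=> [f1 f2]; rewrite /cintegral.
under eq_Rintegral => x _ do rewrite ReM.
under [X in (_ +i* X)%C]eq_Rintegral => x _ do rewrite ImM.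
rewrite RintegralB //; first last.
- by apply: rnice_int => //; apply: rniceM => //; apply: rnice_cst.
- by apply: rnice_int => //; apply: rniceM => //; apply: rnice_cst.
rewrite RintegralD //; first last.
- by apply: rnice_int => //; apply: rniceM => //; apply: rnice_cst.
- by apply: rnice_int => //; apply: rniceM => //; apply: rnice_cst.
rewrite !RintegralZl //; try by apply: rnice_int.
by case: c => a b /=.
Qed.

Lemma cint_cst c : CI (fun _ => c) = c.
Proof.
rewrite /cintegral !Rintegral_cst // muH /= !mulr1.
by case: c.
Qed.

Lemma cint_sum (I : eqType) (s : seq I) (P : pred I) (F : I -> G -> R[i]) :
  (forall i, nice (F i)) ->
  CI (fun x => \sum_(i <- s | P i) F i x) = \sum_(i <- s | P i) CI (F i).
Proof.
move=> hF; elim: s => [|a s IH].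
  rewrite big_nil; transitivity (CI (fun _ => 0)); last exact: cint_cst.
  by apply: cint_eq => x _; rewrite big_nil.
have ha : nice (fun x => if P a then F a x else 0).
  by case: (P a); [exact: hF | exact: nice_cst].
transitivity (CI (fun x => (if P a then F a x else 0) + \sum_(i <- s | P i) F i x)).
  by apply: cint_eq => x _; rewrite big_cons; case: (P a); rewrite ?add0r.
rewrite cintD // ?IH; last exact: nice_sum.
rewrite big_cons; case: (P a) => //.
by rewrite cint_cst add0r.
Qed.
End CInt.
End S.
Section LA.
Variable R : realType.
Local Notation C := R[i].

Lemma adjmxE m p (M : 'M[C]_(m,p)) i j : adjmx M i j = conjc (M j i).
Proof. by rewrite !mxE. Qed.

Lemma adjmxK m p (M : 'M[C]_(m,p)) : adjmx (adjmx M) = M.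
Proof. by apply/matrixP => i j; rewrite !adjmxE conjcK. Qed.

Lemma adjmxM m p q (A : 'M[C]_(m,p)) (B : 'M[C]_(p,q)) :
  adjmx (A *m B) = adjmx B *m adjmx A.
Proof.
apply/matrixP => i j; rewrite !mxE rmorph_sum; apply: eq_bigr => k _.
by rewrite !mxE rmorphM mulrC.
Qed.

Lemma adjmxZ m p c (A : 'M[C]_(m,p)) : adjmx (c *: A) = conjc c *: adjmx A.
Proof. by apply/matrixP => i j; rewrite !mxE rmorphM. Qed.

Lemma adjmxB m p (A B : 'M[C]_(m,p)) : adjmx (A - B) = adjmx A - adjmx B.
Proof. by apply/matrixP => i j; rewrite !mxE rmorphB. Qed.

Lemma adjmx1 m : adjmx (1%:M : 'M[C]_m) = 1%:M.
Proof. by apply/matrixP => i j; rewrite !mxE eq_sym rmorph_nat. Qed.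
Variables (n k : nat) (w : 'I_n -> 'cV[C]_n) (blk : 'I_n -> 'I_k).
Hypothesis horth : is_orthonormal_basis w.

Lemma complete : \sum_a w a *m adjmx (w a) = 1%:M.
Proof.
pose W : 'M[C]_n := \matrix_(i, a) w a i ord0.
have h1 : adjmx W *m W = 1%:M.
  apply/matrixP => a b; have := horth a b; move/matrixP/(_ ord0 ord0).
  rewrite !mxE eqxx mulr1n => <-; apply: eq_bigr => i _; by rewrite !mxE.
have h2 := mulmx1C h1.
apply/matrixP => i j; rewrite -h2 !mxE summxE; apply: eq_bigr => a _.
rewrite !mxE big_ord1 !mxE; done.
Qed.

Definition cf (M : 'M[C]_n) a b := (adjmx (w a) *m M *m w b) ord0 ord0.

Lemma expand M : M = \sum_a \sum_b cf M a b *: (w a *m adjmx (w b)).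
Proof.
rewrite {1}(_ : M = 1%:M *m M *m 1%:M); last by rewrite mul1mx mulmx1.
rewrite -complete !mulmx_suml.
apply: eq_bigr => a _; rewrite !mulmx_sumr; apply: eq_bigr => b _.
rewrite -!mulmxA.
have -> : adjmx (w a) *m (M *m (w b *m adjmx (w b))) = cf M a b *: adjmx (w b).
  by rewrite !mulmxA [adjmx (w a) *m M *m w b]mx11_scalar mul_scalar_mx.
by rewrite scalemxAr.
Qed.
Lemma proj_w b a : block_proj w blk b *m w a = if blk a == b then w a else 0.
Proof.
rewrite /block_proj mulmx_suml.
under eq_bigr => j _ do rewrite -mulmxA horth mul_mx_scalar.
case: ifP => hb.
  rewrite (bigD1 a) //= eqxx scale1r big1 ?addr0 // => j /andP[_ /negbTE ->].
  by rewrite scale0r.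
apply: big1 => j hj; case: eqP => [ja|]; last by rewrite scale0r.
by move: hb; rewrite -ja hj.
Qed.

Lemma w_proj b a : adjmx (w a) *m block_proj w blk b =
  if blk a == b then adjmx (w a) else 0.
Proof.
rewrite /block_proj mulmx_sumr.
under eq_bigr => j _ do rewrite mulmxA horth mul_scalar_mx.
case: ifP => hb.
  rewrite (bigD1 a) //= eqxx scale1r big1 ?addr0 // => j /andP[_].
  by rewrite eq_sym => /negbTE ->; rewrite scale0r.
apply: big1 => j hj; case: eqP => [ja|]; last by rewrite scale0r.
by move: hb; rewrite ja hj.
Qed.

Lemma cf_LD Y a b : in_LD w blk Y -> blk a != blk b -> cf Y a b = 0.
Proof.
move=> [Xb [hX ->]] hab; rewrite /cf mulmx_sumr mulmx_suml summxE big1 // => b' _.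
rewrite hX !mulmxA w_proj; case: ifP => ha; last by rewrite !mul0mx mxE.
rewrite -!mulmxA proj_w; case: ifP => hb; last by rewrite !mulmx0 mxE.
by move: hab; rewrite (eqP ha) (eqP hb) eqxx.
Qed.

Lemma hs_dot_E Z a : hs_dot Z (w a *m adjmx (w a)) = conjc (cf Z a a).
Proof.
rewrite /hs_dot mulmxA mxtrace_mulC [_ *m (adjmx Z *m w a)]mx11_scalar mxtrace_scalar.
rewrite /cf -adjmxE adjmxM adjmxM adjmxK mulmxA.
done.
Qed.

Lemma LD_E a : in_LD w blk (w a *m adjmx (w a)).
Proof.
exists (fun b => if b == blk a then w a *m adjmx (w a) else 0); split.
  move=> b; case: ifP => hb; last by rewrite mulmx0 mul0mx.
  by rewrite mulmxA proj_w eq_sym hb -mulmxA w_proj eq_sym hb.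
by rewrite (bigD1 (blk a)) //= eqxx big1 ?addr0 // => b /negbTE ->.
Qed.

Lemma cfB A B a b : cf (A - B) a b = cf A a b - cf B a b.
Proof. by rewrite /cf mulmxBr mulmxBl !mxE. Qed.

Lemma cf_P (P : 'M[C]_n -> 'M[C]_n) X a :
  is_HS_orth_projector (in_LD w blk) P -> cf (P X) a a = cf X a a.
Proof.
move=> hP; have [_ orth] := hP X.
have := orth _ (LD_E a); rewrite hs_dot_E => /eqP; rewrite conjc_eq0.
by rewrite cfB subr_eq0 => /eqP.
Qed.
End LA.
Section Top.
Variables (R : realType) (G : ptopologicalType).

Lemma cont_measGG (phi : G -> G) : continuous phi ->
  measurable_fun [set: Borel G] (phi : Borel G -> Borel G).
Proof.
move=> cp; apply: (@measurability _ _ (Borel G) (Borel G) setT phi (@open G)) => //.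
move=> _ [B oB <-]; rewrite setTI; apply: sub_sigma_algebra.
by move/continuousP: cp; apply.
Qed.

Lemma cont_rnice (g : G -> R) : compact [set: G] -> continuous g -> rnice g.
Proof.
move=> hc cg; split; first exact: cont_meas.
have := compact_bounded (continuous_compact (continuous_subspaceT (A := [set: G]) cg) hc).
move=> [M [_ hM]]; exists (`|M| + 1) => x.
apply: (hM (`|M| + 1)); first by rewrite ltr_pwDr // ler_norm.
by exists x.
Qed.

Lemma nice_mulmx m p q (A : G -> 'M[R[i]]_(m,p)) (B : G -> 'M[R[i]]_(p,q)) :
  (forall i j, nice (fun x => A x i j)) -> (forall i j, nice (fun x => B x i j)) ->
  forall i j, nice (fun x => (A x *m B x) i j).
Proof.
move=> hA hB i j.
apply: (nice_eq (@nice_sum _ _ _ (index_enum 'I_p) predT (fun l x => A x i l * B x l j) _)).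
  by move=> l; apply: niceM.
by move=> x; rewrite mxE.
Qed.
End Top.
Section Main.
Variables (R : realType) (G : ptopologicalType) (mul : G -> G -> G) (inv : G -> G)
  (e : G) (n : nat) (rep : G -> 'M[R[i]]_n) (H : set G)
  (mu : {measure set (Borel G) -> \bar R}) (k : nat) (w : 'I_n -> 'cV[R[i]]_n)
  (blk : 'I_n -> 'I_k).
Hypotheses (htg : is_topological_group mul inv e) (hcomp : compact [set: G])
  (hrep : is_cont_unitary_rep mul e rep) (hcl : closed H)
  (hab : is_abelian_subgroup mul inv e H) (hhaar : is_normalized_haar mul H mu)
  (hnd : is_NDCSE rep H w blk).

Let horth : is_orthonormal_basis w.
Proof. by case: hnd => [[[]]]. Qed.

Let mH : measurable (H : set (Borel G)).
Proof.
have : measurable (~` H : set (Borel G)).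
  by apply: sub_sigma_algebra; exact: closed_openC.
by move/measurableC; rewrite setCK.
Qed.

Let muH : mu H = 1%E.
Proof.
case: hhaar => h1 h0 _.
have := measureU mu mH (measurableC mH) (setICr H).
rewrite setUCr => E.
have E2 : (mu H + mu (~` H) = 1)%E by rewrite -E; exact: h1.
by rewrite h0 adde0 in E2.
Qed.

Let muHf : (mu H < +oo)%E. Proof. by rewrite muH ltry. Qed.

Let unit_l g : adjmx (rep g) *m rep g = 1%:M.
Proof. by case: hrep => _ _ hu _; exact: mulmx1C (hu g). Qed.

Definition lam a h := (adjmx (w a) *m rep h *m w a) ord0 ord0.

Lemma lamP a h l : rep h *m w a = l *: w a -> lam a h = l.
Proof.
move=> E; rewrite /lam -mulmxA E -scalemxAr horth eqxx !mxE /=.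
by rewrite mulr1.
Qed.

Lemma lamE a h : H h -> rep h *m w a = lam a h *: w a.
Proof.
move=> hh; case: hnd => [[_ hcse] _]; have [l E] := hcse a h hh.
by rewrite (lamP E).
Qed.

Lemma lam_norm a h : H h -> conjc (lam a h) * lam a h = 1.
Proof.
move=> hh.
have E : adjmx (rep h *m w a) *m (rep h *m w a) = adjmx (w a) *m w a.
  by rewrite adjmxM -mulmxA (mulmxA (adjmx (rep h))) unit_l mul1mx.
move: E; rewrite lamE // adjmxZ -scalemxAl -scalemxAr scalerA horth eqxx.
move/matrixP/(_ ord0 ord0); rewrite !mxE /= mulr1 => ->.
done.
Qed.

Lemma lamM a h0 h : H h0 -> H h -> lam a (mul h0 h) = lam a h0 * lam a h.
Proof.
move=> h0H hH; apply: lamP; case: hrep => _ hm _ _.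
by rewrite hm -mulmxA lamE // -scalemxAr lamE // scalerA mulrC.
Qed.

Let nice_rep i j : nice (fun g => rep g i j).
Proof. by case: hrep => _ _ _ hc; case: (hc i j) => c1 c2; split; apply: cont_rnice. Qed.

Lemma nice_lam a : nice (lam a).
Proof.
rewrite /lam.
apply: (nice_mulmx (A := fun h => adjmx (w a) *m rep h) (B := fun _ => w a)).
  by move=> i j; apply: nice_mulmx => i' j'; [exact: nice_cst | exact: nice_rep].
by move=> *; exact: nice_cst.
Qed.

Definition chi a b h := lam a h * conjc (lam b h).

Lemma nice_chi a b : nice (chi a b).
Proof. exact: niceM (nice_lam a) (niceJ (nice_lam b)). Qed.

Local Notation CI := (cintegral mu H).

Let cmul h0 : continuous (mul h0).
Proof.
case: htg => _ _ _ cm _; move=> x.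
apply: (continuous_comp (f := fun y => (h0, y)) (g := fun p => mul p.1 p.2)); last exact: cm.
by apply: cvg_pair; [exact: cvg_cst | exact: cvg_id].
Qed.

Let hm h0 : H h0 -> forall A : set (Borel G), measurable A ->
  mu (mul h0 @^-1` A) = mu A.
Proof.
move=> h0H A mA; case: hhaar => _ _ hinv; case: hab => he hmc hic _.
case: htg => ass hid hinvax _ _.
rewrite -(hinv (inv h0) (hic _ h0H) A mA); congr (mu _); apply/seteqP; split.
- move=> y /= Ay; exists (mul h0 y) => //.
  by rewrite ass (hinvax h0).1 (hid y).1.
- by move=> _ [x Ax <-] /=; rewrite ass (hinvax h0).2 (hid x).1.
Qed.

Let hH h0 : H h0 -> mul h0 @^-1` H = H.
Proof.
move=> h0H; case: hab => he hmc hic _; case: htg => ass hid hinvax _ _.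
apply/seteqP; split => y /=.
- move=> Hy'; have := hmc _ _ (hic _ h0H) Hy'.
  by rewrite ass (hinvax h0).1 (hid y).1.
- by move=> Hy; exact: hmc.
Qed.

Lemma cint_inv h0 f : H h0 -> nice f -> CI (fun x => f (mul h0 x)) = CI f.
Proof.
move=> h0H [f1 f2]; rewrite /cintegral.
have mphi := cont_measGG (@cmul h0).
by rewrite (inv_int mphi (hm h0H) (hH h0H) mH muHf f1)
           (inv_int mphi (hm h0H) (hH h0H) mH muHf f2).
Qed.

Lemma CI_diag a : CI (chi a a) = 1.
Proof.
transitivity (CI (fun _ => 1)); last exact: cint_cst.
apply: cint_eq => x xH; rewrite /chi mulrC lam_norm //.
by rewrite inE in xH.
Qed.

Lemma CI_off a b : a != b -> blk a = blk b -> CI (chi a b) = 0.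
Proof.
move=> nab bab; case: hnd => _ /(_ a b nab bab) [h0 [h0H [l [l' [E1 E2 nl]]]]].
have l1 := lamP E1; have l2 := lamP E2.
set c := chi a b h0.
have hinv : CI (chi a b) = c * CI (chi a b).
  rewrite -{1}(cint_inv h0H (nice_chi a b)) -(cintZ mH muH _ (nice_chi a b)).
  apply: cint_eq => x xH; rewrite inE in xH.
  by rewrite /c /chi lamM // lamM // rmorphM mulrACA.
have c1 : c != 1.
  apply/negP => /eqP c1; move/negP: nl; apply.
  rewrite /c /chi l1 l2 in c1.
  have := lam_norm b h0H; rewrite l2 => n'.
  by apply/eqP; rewrite -[l]mulr1 -n' mulrA c1 mul1r.
have : (1 - c) * CI (chi a b) = 0 by rewrite mulrBl mul1r -hinv subrr.
move/eqP; rewrite mulf_eq0 subr_eq0 eq_sym (negbTE c1) /=.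
by move/eqP.
Qed.

Lemma main_eq (P_D : 'M[R[i]]_n -> 'M[R[i]]_n) :
  is_HS_orth_projector (in_LD w blk) P_D ->
  forall X, dephase w X = twirl rep mu H (P_D X).
Proof.
move=> hP X; set Y := P_D X.
have hLD : in_LD w blk Y by case: (hP X).
apply/matrixP => i j; rewrite /twirl mxE.
have key : forall x a b, H x ->
    rep x *m (w a *m adjmx (w b)) *m adjmx (rep x) = chi a b x *: (w a *m adjmx (w b)).
  move=> x a b hx; rewrite mulmxA -mulmxA -adjmxM !lamE // adjmxZ.
  by rewrite -scalemxAl -scalemxAr scalerA.
transitivity (CI (fun x => \sum_a \sum_b
                  (cf w Y a b * (w a *m adjmx (w b)) i j) * chi a b x)); last first.
  apply: cint_eq => x; rewrite inE => hx.
  rewrite {2}(expand horth Y) mulmx_sumr mulmx_suml summxE; apply: eq_bigr => a _.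
  rewrite mulmx_sumr mulmx_suml summxE; apply: eq_bigr => b _.
  by rewrite -scalemxAr -scalemxAl key // scalerA [in RHS]mxE mulrAC.
rewrite (cint_sum mH muH); last first.
  move=> a; apply: nice_sum => b; apply: niceM; [exact: nice_cst | exact: nice_chi].
rewrite /dephase summxE; apply: eq_bigr => a _.
rewrite (cint_sum mH muH); last first.
  by move=> b; apply: niceM; [exact: nice_cst | exact: nice_chi].
rewrite (bigD1 a) //= big1 ?addr0.
  rewrite (cintZ mH muH _ (nice_chi a a)) CI_diag mulr1 [in LHS]mxE.
  by rewrite /Y (cf_P horth X a hP).
move=> b nba; rewrite (cintZ mH muH _ (nice_chi a b)).
case: (eqVneq (blk a) (blk b)) => hb.
  by rewrite CI_off ?mulr0 // eq_sym.
by rewrite (cf_LD horth hLD hb) !mul0r.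
Qed.
End Main.

Unset Implicit Arguments.
Theorem lemma2 (R : realType) (G : ptopologicalType)
  (mul : G -> G -> G) (inv : G -> G) (e : G)
  (n : nat) (rep : G -> 'M[R[i]]_n)
  (H : set G) (mu : {measure set (Borel G) -> \bar R})
  (k : nat) (w : 'I_n -> 'cV[R[i]]_n) (blk : 'I_n -> 'I_k)
  (P_D : 'M[R[i]]_n -> 'M[R[i]]_n) :
  is_topological_group mul inv e ->
  compact [set: G] ->
  is_cont_unitary_rep mul e rep ->
  closed H ->
  is_abelian_subgroup mul inv e H ->
  is_normalized_haar mul H mu ->
  is_NDCSE rep H w blk ->
  is_HS_orth_projector (in_LD w blk) P_D ->
  forall X : 'M[R[i]]_n, dephase w X = twirl rep mu H (P_D X).
Proof.
move=> htg hcomp hrep hcl hab hhaar hnd hP X.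
exact: (main_eq htg hcomp hrep hcl hab hhaar hnd hP X).
Qed.
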